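(* Let $N\ge1$ and consider configurations $(S_{j,i},\sigma_i)$ with $S_{j,i}\in\{-1,0,1\}$ for $j\in\mathbb Z_6$, $i\in\mathbb Z_N$, and $\sigma_i\in\{-\tfrac12,\tfrac12\}$ (indices $j$ mod 6, $i$ mod $N$). Let $D\in\mathbb R$ and $$\mathcal H=\sum_{i=1}^N\Bigl[-\sum_{j=1}^{6}\bigl(S_{j,i}S_{j,i+1}+S_{j,i}S_{j+1,i}+S_{j,i}\sigma_i+D\,S_{j,i}^2\bigr)-\sigma_i\sigma_{i+1}\Bigr].$$ Then $\min\mathcal H/N=\min\bigl(-\tfrac{61}{4}-6D,\,-\tfrac14\bigr)$. Moreover, if $D>-\tfrac52$, the minimizers are exactly the two configurations with $S_{j,i}=\tau$, $\sigma_i=\tau/2$ for all $i,j$ ($\tau=\pm1$), with energy $N(-\tfrac{61}{4}-6D)$; if $D<-\tfrac52$, the minimizers are exactly the two configurations with all $S_{j,i}=0$ and all $\sigma_i$ equal, with energy $-N/4$.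
   Context: This is the mixed spin-1/2 (core, $\sigma_i$) and spin-1 (shell, $S_{j,i}$) hexagonal nanowire with couplings $J_1=J_s=J_c=1$ (core–shell, shell–shell, core–core) and single-ion anisotropy $D$, with periodic boundary conditions. The two ground states are called ferromagnetic (FM) and core-ferromagnetic (CFM). *)

(* Defs.v *)
From HB Require Import structures.
From mathcomp Require Import all_boot all_order all_algebra.
Set Implicit Arguments. Unset Strict Implicit. Unset Printing Implicit Defensive.
Import Order.TTheory GRing.Theory Num.Theory.
Local Open Scope ring_scope.

(* Shell spins S j i (j : 'I_6 around the hexagon, i : 'I_N along the wire),
   core spins sg i; all real-valued, constrained by [valid_config]. *)
Definition shell_config (R : realFieldType) (N : nat) := 'I_6 -> 'I_N -> R.
Definition core_config (R : realFieldType) (N : nat) := 'I_N -> R.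

Definition valid_config (R : realFieldType) (N : nat)
  (S : shell_config R N) (sg : core_config R N) : Prop :=
  (forall j i, S j i = -1 \/ S j i = 0 \/ S j i = 1) /\
  (forall i, sg i = - (1/2) \/ sg i = 1/2).

(* Hamiltonian with J1 = Js = Jc = 1, periodic indices via ordS (mod 6, mod N). *)
Definition hamiltonian (R : realFieldType) (N : nat) (D : R)
  (S : shell_config R N) (sg : core_config R N) : R :=
  \sum_(i < N)
    ( - (\sum_(j < 6)
           (S j i * S j (ordS i) + S j i * S (ordS j) i
            + S j i * sg i + D * (S j i) ^+ 2))
      - sg i * sg (ordS i)).

(* Main.v *)
Require Import Defs.
From HB Require Import structures.
From mathcomp Require Import all_boot all_order all_algebra.
From mathcomp Require Import ring lra.
Import Order.TTheory GRing.Theory Num.Theory.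
Local Open Scope ring_scope.

Section Aux.
Variable R : realFieldType.
Variable n : nat.
Variable D : R.
Implicit Types (S : shell_config R n) (sg : core_config R n).

Definition gg (s t : R) : R := - ((2 + D) * s ^+ 2 + s * t).

Definition site S sg (i : 'I_n) : R :=
  \sum_(j < 6) gg (S j i) (sg i) - 1/4.

Definition slack S sg (i : 'I_n) : R :=
  \sum_(j < 6) ((S j i - S j (ordS i)) ^+ 2 / 2 + (S j i - S (ordS j) i) ^+ 2 / 2)
  + (sg i - sg (ordS i)) ^+ 2 / 2.

Definition resid S (i : 'I_n) : R :=
  \sum_(j < 6) S j i ^+ 2 - (\sum_(j < 6) S j (ordS i) ^+ 2) / 2
  - (\sum_(j < 6) S (ordS j) i ^+ 2) / 2.

Lemma sg_sq (a b : R) : (a = - (1/2) \/ a = 1/2) -> (b = - (1/2) \/ b = 1/2) ->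
  (a - b) ^+ 2 / 2 = 1/4 - a * b.
Proof. by case=> ->; case=> ->; field. Qed.

Lemma pointwise S sg i : (sg i = - (1/2) \/ sg i = 1/2) ->
  (sg (ordS i) = - (1/2) \/ sg (ordS i) = 1/2) ->
  - (\sum_(j < 6)
           (S j i * S j (ordS i) + S j i * S (ordS j) i
            + S j i * sg i + D * (S j i) ^+ 2))
      - sg i * sg (ordS i) = site S sg i + slack S sg i + resid S i.
Proof.
move=> h1 h2; rewrite /site /slack /resid sg_sq //.
rewrite !big_ord_recr !big_ord0 /gg /=.
by field.
Qed.

Lemma resid0 S : \sum_(i < n) resid S i = 0.
Proof.
have E : forall i, resid S i = (\sum_(j < 6) S j i ^+ 2 - \sum_(j < 6) S j (ordS i) ^+ 2) / 2.
  move=> i; rewrite /resid.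
  have -> : \sum_(j < 6) S (ordS j) i ^+ 2 = \sum_(j < 6) S j i ^+ 2.
    by rewrite [RHS](reindex_inj (@ordS_inj 6)).
  by field.
under eq_bigr do rewrite E.
rewrite -mulr_suml sumrB.
have -> : \sum_(i < n) \sum_(j < 6) S j (ordS i) ^+ 2 = \sum_(i < n) \sum_(j < 6) S j i ^+ 2.
  by rewrite [RHS](reindex_inj (@ordS_inj n)).
by rewrite subrr mul0r.
Qed.

Lemma decomp S sg : valid_config S sg ->
  hamiltonian D S sg = \sum_(i < n) site S sg i + \sum_(i < n) slack S sg i.
Proof.
move=> [_ hs]; rewrite /hamiltonian.
rewrite (eq_bigr (fun i => site S sg i + slack S sg i + resid S i)); last first.
  by move=> i _; apply: pointwise.
by rewrite big_split /= resid0 addr0 big_split.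
Qed.

Lemma slack_ge0 S sg i : 0 <= slack S sg i.
Proof.
rewrite /slack; apply: addr_ge0; last by rewrite divr_ge0 ?sqr_ge0.
apply: sumr_ge0 => j _; apply: addr_ge0; by rewrite divr_ge0 ?sqr_ge0.
Qed.

Lemma sum_const_ord (x : R) : \sum_(i < n) x = n%:R * x.
Proof. by rewrite sumr_const card_ord mulr_natl. Qed.

Lemma sum_const6 (x : R) : \sum_(i < 6) x = 6 * x.
Proof. by rewrite sumr_const card_ord mulr_natl. Qed.

Definition valid_s (s : R) := s = -1 \/ s = 0 \/ s = 1.
Definition valid_t (t : R) := t = - (1/2) \/ t = 1/2.

Lemma H_decomp c S sg : valid_config S sg ->
  hamiltonian D S sg - n%:R * (6 * c - 1/4) =
  \sum_(i < n) (\sum_(j < 6) (gg (S j i) (sg i) - c)) + \sum_(i < n) slack S sg i.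
Proof.
move=> v; rewrite decomp // -sum_const_ord addrAC -sumrB; congr (_ + _).
apply: eq_bigr => i _; rewrite /site sumrB sum_const6; ring.
Qed.

Lemma lower c S sg : (forall s t, valid_s s -> valid_t t -> c <= gg s t) ->
  valid_config S sg -> n%:R * (6 * c - 1/4) <= hamiltonian D S sg.
Proof.
move=> hc v; rewrite -subr_ge0 H_decomp //; apply: addr_ge0; apply: sumr_ge0 => i _;
  last exact: slack_ge0.
apply: sumr_ge0 => j _; rewrite subr_ge0; apply: hc; [exact: v.1 | exact: v.2].
Qed.

Lemma equal c S sg : (forall s t, valid_s s -> valid_t t -> c <= gg s t) ->
  valid_config S sg -> hamiltonian D S sg = n%:R * (6 * c - 1/4) ->
  (forall i j, gg (S j i) (sg i) = c) /\ (forall i, sg i = sg (ordS i)).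
Proof.
move=> hc v he.
have := H_decomp c S sg v; rewrite he subrr => /esym/eqP.
have A : forall i, 0 <= \sum_(j < 6) (gg (S j i) (sg i) - c).
  move=> i; apply: sumr_ge0 => j _; rewrite subr_ge0; apply: hc; [exact: v.1 | exact: v.2].
rewrite paddr_eq0; last by apply: sumr_ge0 => i _; exact: slack_ge0.
  2: by apply: sumr_ge0.
case/andP => /eqP h1 /eqP h2; split.
  move=> i j.
  have := psumr_eq0P (fun i _ => A i) h1 (i := i) isT.
  move=> h3.
  have B : forall j, 0 <= gg (S j i) (sg i) - c.
    by move=> j'; rewrite subr_ge0; apply: hc; [exact: v.1 | exact: v.2].
  have := psumr_eq0P (fun j _ => B j) h3 (i := j) isT.
  by move/eqP; rewrite subr_eq0 => /eqP.
move=> i.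
have := psumr_eq0P (fun i _ => slack_ge0 S sg i) h2 (i := i) isT.
rewrite /slack => /eqP; rewrite paddr_eq0; last by rewrite divr_ge0 ?sqr_ge0.
  2: by apply: sumr_ge0 => j _; apply: addr_ge0; rewrite divr_ge0 ?sqr_ge0.
case/andP => _; rewrite mulf_eq0 invr_eq0 pnatr_eq0 orbF sqrf_eq0 subr_eq0.
by move/eqP.
Qed.

Lemma attain c S sg : valid_config S sg ->
  (forall i j, gg (S j i) (sg i) = c) -> (forall i, sg i = sg (ordS i)) ->
  (forall i j, S j i = S j (ordS i)) -> (forall i j, S j i = S (ordS j) i) ->
  hamiltonian D S sg = n%:R * (6 * c - 1/4).
Proof.
move=> v h1 h2 h3 h4; apply/eqP; rewrite -subr_eq0 H_decomp //.
rewrite big1 ?add0r; last by move=> i _; apply: big1 => j _; rewrite h1 subrr.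
apply/eqP; apply: big1 => i _; rewrite /slack -h2 subrr expr2 mulr0 mul0r addr0.
by apply: big1 => j _; rewrite -h3 -h4 subrr expr2 mulr0 mul0r addr0.
Qed.

End Aux.
Arguments gg {R}. Arguments valid_s {R}. Arguments valid_t {R}.
Arguments equal {R n D c S sg}.

Lemma chain (R : realFieldType) n (f : 'I_n.+1 -> R) :
  (forall i, f i = f (ordS i)) -> forall i, f i = f ord0.
Proof.
move=> h.
suff K : forall k (hk : (k < n.+1)%N), f (Ordinal hk) = f ord0.
  by case=> k hk; apply: K.
elim=> [|k IH] hk; first by congr f; apply: val_inj.
have hk' : (k < n.+1)%N by apply: ltnW.
have -> : Ordinal hk = ordS (Ordinal hk').
  by apply: val_inj; rewrite /= modn_small.
by rewrite -h IH.
Qed.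

Arguments chain {R n f}.

Lemma g1 (R : realFieldType) (D s t : R) : -(5/2) <= D -> valid_s s -> valid_t t ->
  -(5/2) - D <= gg D s t.
Proof. by rewrite /gg => hD [->|[->|->]] [->|->]; lra. Qed.

Lemma g2 (R : realFieldType) (D s t : R) : D <= -(5/2) -> valid_s s -> valid_t t ->
  0 <= gg D s t.
Proof. by rewrite /gg => hD [->|[->|->]] [->|->]; lra. Qed.

Lemma g1eq (R : realFieldType) (D s t : R) : -(5/2) < D -> valid_s s -> valid_t t ->
  gg D s t = -(5/2) - D -> s = 2 * t.
Proof. by rewrite /gg => hD [->|[->|->]] [->|->] h; lra. Qed.

Lemma g2eq (R : realFieldType) (D s t : R) : D < -(5/2) -> valid_s s -> valid_t t ->
  gg D s t = 0 -> s = 0.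
Proof. by rewrite /gg => hD [->|[->|->]] [->|->] h; lra. Qed.

Theorem mainTheorem8 (R : realFieldType) (N : nat) (D : R) (hN : (0 < N)%N) :
  let m := Num.min (- (61 / 4) - 6 * D) (- (1 / 4)) in
  (* min H / N = m : attained, and a lower bound *)
  ((exists (S : shell_config R N) (sg : core_config R N),
       valid_config S sg /\ hamiltonian D S sg = N%:R * m) /\
   (forall (S : shell_config R N) (sg : core_config R N),
       valid_config S sg -> N%:R * m <= hamiltonian D S sg)) /\
  (* D > -5/2 : exactly the two ferromagnetic configurations *)
  (- (5 / 2) < D ->
     (forall (S : shell_config R N) (sg : core_config R N),
        valid_config S sg ->
        (hamiltonian D S sg = N%:R * m <->
         exists tau : R, (tau = 1 \/ tau = -1) /\
           (forall j i, S j i = tau) /\ (forall i, sg i = tau / 2))) /\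
     N%:R * m = N%:R * (- (61 / 4) - 6 * D)) /\
  (* D < -5/2 : exactly the two core-ferromagnetic configurations *)
  (D < - (5 / 2) ->
     (forall (S : shell_config R N) (sg : core_config R N),
        valid_config S sg ->
        (hamiltonian D S sg = N%:R * m <->
         (forall j i, S j i = 0) /\ (forall i i', sg i = sg i'))) /\
     N%:R * m = - N%:R / 4).
Proof.
move=> m; case: N hN => [//|n] _.
have [hD|hD] := leP (-(5/2)) D.
- have em : m = 6 * (-(5/2) - D) - 1/4.
    by rewrite /m min_l; lra.
  have em' : m = - (61 / 4) - 6 * D by rewrite em; lra.
  split; [split|split].
  + exists (fun _ _ => 1), (fun _ => 1/2).
    have v : valid_config (fun _ _ => 1 : R) (fun _ => 1/2 : R).
      by split=> [j i|i]; [right; right|right].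
    split=> //; rewrite em; apply: attain => //.
    by move=> i j; rewrite /gg; lra.
  + by move=> S sg v; rewrite em; apply: lower => // s t; apply: g1.
  + move=> hD'; split; last by rewrite em'.
    move=> S sg v; split.
    * rewrite em => he.
      have [E1 E2] := equal (fun s t => @g1 R D s t hD) v he.
      have C := chain E2.
      exists (2 * sg ord0); split.
        by case: (v.2 ord0) => ->; [right|left]; lra.
      split=> [j i|i]; last by rewrite (C i); field.
      by rewrite -(C i); apply: (@g1eq R D _ _ hD' (v.1 j i) (v.2 i) (E1 i j)).
    * case=> tau [ht [hS hs]]; rewrite em; apply: attain => //.
      - by move=> i j; rewrite hS hs /gg; case: ht => ->; lra.
      - by move=> i; rewrite !hs.
      - by move=> i j; rewrite !hS.
      - by move=> i j; rewrite !hS.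
  + by move=> hD'; lra.
- have em : m = 6 * 0 - 1/4.
    by rewrite /m min_r; lra.
  split; [split|split].
  + exists (fun _ _ => 0), (fun _ => 1/2).
    have v : valid_config (fun _ _ => 0 : R) (fun _ => 1/2 : R).
      by split=> [j i|i]; [right; left|right].
    split=> //; rewrite em; apply: attain => //.
    by move=> i j; rewrite /gg; lra.
  + by move=> S sg v; rewrite em; apply: lower => // s t; apply: g2; apply: ltW.
  + by move=> hD'; lra.
  + move=> hD'; split; last by rewrite em; lra.
    move=> S sg v; split.
    * rewrite em => he.
      have [E1 E2] := equal (fun s t => @g2 R D s t (ltW hD)) v he.
      have C := chain E2.
      split=> [j i|i i']; last by rewrite (C i) (C i').
      exact: (@g2eq R D _ _ hD (v.1 j i) (v.2 i) (E1 i j)).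
    * case=> hS hs; rewrite em; apply: attain => //.
      - by move=> i j; rewrite hS /gg; ring.
      - by move=> i j; rewrite !hS.
      - by move=> i j; rewrite !hS.
Qed.
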